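(* For any proper, lsc, convex $f:\mathbb R^n\to\overline{\mathbb R}$, $f$ is B-smooth if and only if $f=\overleftarrow{\mathrm{env}}_\phi g$ for some proper function $g:\mathbb R^n\to\overline{\mathbb R}$.
   Context: Standing assumption: $\phi:\mathbb R^n\to\mathbb R$ is convex, finite-valued, differentiable and strictly convex (Legendre with full domain), super-coercive. $D_\phi(x,y)=\phi(x)-\phi(y)-\langle\nabla\phi(y),x-y\rangle$, and $\overleftarrow{\mathrm{env}}_\phi g(x)=\inf_y\{g(y)+D_\phi(x,y)\}$. $f$ is B-weakly convex if $f+\phi$ is convex, and B-smooth if both $f$ and $-f$ are proper and B-weakly convex. *)

(* Defs.v *)
From HB Require Import structures.
From mathcomp Require Import all_boot all_order all_algebra.
From mathcomp Require Import all_classical all_reals all_analysis.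
Set Implicit Arguments. Unset Strict Implicit. Unset Printing Implicit Defensive.
Import Order.TTheory GRing.Theory Num.Theory.
Import numFieldNormedType.Exports.
Local Open Scope classical_set_scope.
Local Open Scope ring_scope.

Section Defs.
Context {R : realType} {n : nat}.
Notation V := 'rV[R]_n.

Definition rconvex (phi : V -> R) : Prop :=
  forall (x y : V) (t : R), 0 <= t <= 1 ->
    phi (t *: x + (1 - t) *: y) <= t * phi x + (1 - t) * phi y.

Definition strictly_convex (phi : V -> R) : Prop :=
  forall (x y : V) (t : R), x != y -> 0 < t < 1 ->
    phi (t *: x + (1 - t) *: y) < t * phi x + (1 - t) * phi y.

(* super-coercive: phi x / |x| -> +oo as |x| -> +oo *)
Definition supercoercive (phi : V -> R) : Prop :=
  forall M : R, exists r : R, forall x : V, r < `|x| -> M * `|x| <= phi x.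

(* convexity of an extended-valued function: its epigraph is convex *)
Definition econvex (f : V -> \bar R) : Prop :=
  forall (x y : V) (a b t : R), 0 <= t <= 1 ->
    (f x <= a%:E)%E -> (f y <= b%:E)%E ->
    (f (t *: x + (1 - t) *: y)%R <= (t * a + (1 - t) * b)%R%:E)%E.

Definition eproper (f : V -> \bar R) : Prop :=
  (forall x, f x != -oo%E) /\ (exists x, f x != +oo%E).

Definition elsc (f : V -> \bar R) : Prop :=
  forall a : R, closed [set x | (f x <= a%:E)%E].

(* Bregman distance D_phi(x,y) = phi x - phi y - <grad phi(y), x - y>,
   where <grad phi(y), v> is the differential 'd phi y applied to v. *)
Definition bregman (phi : V -> R) (x y : V) : R :=
  phi x - phi y - 'd phi y (x - y).

Definition left_env (phi : V -> R) (g : V -> \bar R) (x : V) : \bar R :=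
  ereal_inf [set (g y + (bregman phi x y)%:E)%E | y in [set: V]].

Definition B_weakly_convex (phi : V -> R) (f : V -> \bar R) : Prop :=
  econvex (fun x => (f x + (phi x)%:E)%E).

Definition B_smooth (phi : V -> R) (f : V -> \bar R) : Prop :=
  eproper f /\ eproper (fun x => (- f x)%E) /\
  B_weakly_convex phi f /\ B_weakly_convex phi (fun x => (- f x)%E).

End Defs.

(* Main.v *)
Require Import Defs.
From HB Require Import structures.
From mathcomp Require Import all_boot all_order all_algebra.
From mathcomp Require Import all_classical all_reals all_analysis.
Import Order.TTheory GRing.Theory Num.Theory.
Import numFieldNormedType.Exports.
Local Open Scope classical_set_scope.
Local Open Scope ring_scope.

Lemma diff_bound (R : realType) (n : nat) (phi : 'rV[R]_n -> R) (y : 'rV[R]_n) :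
  differentiable phi y -> forall e : R, 0 < e ->
  exists2 d : R, 0 < d & forall h, `|h| < d ->
    `|phi (y + h) - phi y - 'd phi y h| <= e * `|h|.
Proof.
move=> /diff_locally /eqaddoP dphi e e0.
have := dphi e e0.
move=> /nbhs_norm0P [d d0 Hd]; exists d => // h hd.
have := Hd h; rewrite /=.
move=> /(_ hd).
suff -> : (phi \o +%R^~ y - (cst (phi y) + 'd phi y)) h = phi (y + h) - phi y - 'd phi y h by [].
by rewrite !fctE /= (addrC h y) opprD addrA.
Qed.


From mathcomp Require Import ring lra.

Lemma line_bound (R : realType) (n : nat) (phi : 'rV[R]_n -> R) (y v : 'rV[R]_n) :
  differentiable phi y -> forall e : R, 0 < e ->
  exists2 d : R, 0 < d & forall t, 0 < t -> t < d ->
    `|phi (y + t *: v) - phi y - t * 'd phi y v| <= e * t.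
Proof.
move=> dy e e0.
have v1 : 0 < `|v| + 1 by apply: ltr_wpDl.
have [d d0 Hd] := @diff_bound _ _ _ _ dy _ (divr_gt0 e0 v1).
exists (d / (`|v| + 1)); first exact: divr_gt0.
move=> t t0 td.
have tv : `|t *: v| < d.
  rewrite normrZ gtr0_norm //.
  apply: (@le_lt_trans _ _ (t * (`|v| + 1))).
    by rewrite ler_pM2l // lerDl.
  by rewrite -ltr_pdivlMr.
have := Hd _ tv; rewrite linearZ /= => H; apply: le_trans H _.
rewrite normrZ gtr0_norm // mulrA.
have ce : e / (`|v|+1) * (`|v|+1) = e by rewrite divfK ?gt_eqF.
have c0 : 0 < e / (`|v|+1) by apply: divr_gt0.
rewrite -[in leRHS]ce.
set c := e / (`|v|+1) in c0 ce *.
nra.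
Qed.

Definition dq {R : realType} {n : nat} (k : 'rV[R]_n -> R) x v t :=
  (k (x + t *: v) - k x) / t.
Definition dd {R : realType} {n : nat} (k : 'rV[R]_n -> R) x v :=
  inf [set dq k x v t | t in [set t : R | 0 < t]].

Lemma dq_mono (R : realType) (n : nat) (k : 'rV[R]_n -> R) x v s t :
  rconvex k -> 0 < s -> s <= t -> dq k x v s <= dq k x v t.
Proof.
move=> ck s0 st.
have t0 : 0 < t by apply: lt_le_trans st.
have l01 : 0 <= s / t <= 1.
  apply/andP; split; first by rewrite divr_ge0 // ltW.
  by rewrite ler_pdivrMr // mul1r.
have := ck (x + t *: v) x (s / t) l01.
have -> : s / t *: (x + t *: v) + (1 - s / t) *: x = x + s *: v.
  apply/rowP => i; rewrite !mxE; field; exact: lt0r_neq0.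
move=> H; rewrite /dq.
have H2 : (k (x + s *: v) - k x) <= s / t * (k (x + t *: v) - k x) by lra.
rewrite ler_pdivrMr //; apply: le_trans H2 _.
by rewrite le_eqVlt; apply/orP; left; apply/eqP; ring.
Qed.

Lemma dq_lb (R : realType) (n : nat) (k : 'rV[R]_n -> R) x v t :
  rconvex k -> 0 < t -> k x - k (x - v) <= dq k x v t.
Proof.
move=> ck t0.
have t1 : 0 < 1 + t by lra.
have l01 : 0 <= 1 / (1 + t) <= 1.
  apply/andP; split; first by rewrite divr_ge0 // ltW.
  by rewrite ler_pdivrMr // mul1r lerDl ltW.
have := ck (x + t *: v) (x - v) _ l01.
have -> : 1 / (1 + t) *: (x + t *: v) + (1 - 1 / (1 + t)) *: (x - v) = x.
  apply/rowP => i; rewrite !mxE; field; exact: lt0r_neq0.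
move=> H; rewrite /dq ler_pdivlMr //.
have E : 1 / (1 + t) * (1 + t) = 1 by rewrite divfK ?gt_eqF.
set l := 1 / (1 + t) in H E l01.
have H' := ler_wpM2l (ltW t1) H.
have EE : (1 + t) * (l * k (x + t *: v) + (1 - l) * k (x - v)) =
  k (x + t *: v) + t * k (x - v).
  by rewrite /l; field; exact: lt0r_neq0.
rewrite EE in H'; lra.
Qed.

Lemma dq_has_inf (R : realType) (n : nat) (k : 'rV[R]_n -> R) x v :
  rconvex k -> has_inf [set dq k x v t | t in [set t : R | 0 < t]].
Proof.
move=> ck; split; first by exists (dq k x v 1), 1 => //=.
exists (k x - k (x - v)) => _ [t /= t0 <-]; exact: dq_lb.
Qed.

Lemma dd_le (R : realType) (n : nat) (k : 'rV[R]_n -> R) x v t :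
  rconvex k -> 0 < t -> dd k x v <= dq k x v t.
Proof.
move=> ck t0; have [_ hl] := @dq_has_inf _ _ k x v ck.
by apply: ge_inf => //; exists t.
Qed.

Lemma dd_ge (R : realType) (n : nat) (k : 'rV[R]_n -> R) x v a :
  (forall t, 0 < t -> a <= dq k x v t) -> a <= dd k x v.
Proof.
move=> H; apply: lb_le_inf; first by exists (dq k x v 1), 1 => //=.
by move=> _ [t /= t0 <-]; exact: H.
Qed.

Lemma dd_approx (R : realType) (n : nat) (k : 'rV[R]_n -> R) x v e :
  rconvex k -> 0 < e -> exists2 t0, 0 < t0 &
    forall t, 0 < t -> t <= t0 -> dq k x v t <= dd k x v + e.
Proof.
move=> ck e0; have [_ [t /= t0 <-] He] := inf_adherent e0 (@dq_has_inf _ _ k x v ck).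
exists t => // s s0 st; apply: le_trans (ltW He).
exact: dq_mono.
Qed.

Lemma dq_cvg (R : realType) (n : nat) (phi : 'rV[R]_n -> R) (x v : 'rV[R]_n) :
  differentiable phi x -> forall e : R, 0 < e ->
  exists2 d : R, 0 < d & forall t, 0 < t -> t < d ->
    'd phi x v - e <= dq phi x v t <= 'd phi x v + e.
Proof.
move=> dx e e0; have [d d0 Hd] := @line_bound _ _ _ _ v dx _ e0.
exists d => // t t0 td; have := Hd _ t0 td.
rewrite ler_norml => /andP [H1 H2].
rewrite /dq; apply/andP; split.
  by rewrite ler_pdivlMr //; nra.
by rewrite ler_pdivrMr //; nra.
Qed.

Lemma dd_sum (R : realType) (n : nat) (phi h f0 : 'rV[R]_n -> R) (x v : 'rV[R]_n) :
  differentiable phi x -> rconvex h -> rconvex f0 ->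
  (forall z, h z + f0 z = phi z) ->
  dd h x v + dd f0 x v = 'd phi x v.
Proof.
move=> dx ch cf hf.
have qs t : dq h x v t + dq f0 x v t = dq phi x v t.
  by rewrite /dq -mulrDl addrACA -opprD !hf.
apply/eqP; rewrite eq_le; apply/andP; split.
  apply/ler_addgt0Pr => e e0.
  have [d d0 Hd] := @dq_cvg _ _ _ _ v dx _ e0.
  have d2 : 0 < d / 2 by lra.
  have d2d : d / 2 < d by lra.
  have /andP [_ H] := Hd (d / 2) d2 d2d.
  rewrite -qs in H; apply: le_trans H.
  by apply: lerD; apply: dd_le.
apply/ler_addgt0Pr => e e0.
have e3 : 0 < e / 3 by apply: divr_gt0.
have [d d0 Hd] := @dq_cvg _ _ _ _ v dx _ e3.
have [t1 t10 H1] := @dd_approx _ _ h x v _ ch e3.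
have [t2 t20 H2] := @dd_approx _ _ f0 x v _ cf e3.
pose t := Num.min (d / 2) (Num.min t1 t2).
have t0 : 0 < t by rewrite !lt_min t10 t20 andbT divr_gt0.
have td : t < d.
  have : t <= d / 2 by rewrite /t ge_min le_refl.
  lra.
have tt1 : t <= t1 by rewrite /t !ge_min le_refl orbT.
have tt2 : t <= t2 by rewrite /t !ge_min le_refl !orbT.
have /andP [H _] := Hd t t0 td.
have := H1 t t0 tt1; have := H2 t t0 tt2.
rewrite -qs in H; lra.
Qed.

Lemma dd_opp_ge (R : realType) (n : nat) (k : 'rV[R]_n -> R) x v :
  rconvex k -> 0 <= dd k x v + dd k x (- v).
Proof.
move=> ck; apply/ler_addgt0Pr => e e0.
have e2 : 0 < e / 2 by lra.
have [t1 t10 H1] := @dd_approx _ _ k x v _ ck e2.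
have [t2 t20 H2] := @dd_approx _ _ k x (- v) _ ck e2.
pose t := Num.min t1 t2.
have t0 : 0 < t by rewrite !lt_min t10 t20.
have tt1 : t <= t1 by rewrite /t !ge_min le_refl.
have tt2 : t <= t2 by rewrite /t !ge_min le_refl !orbT.
have := H1 t t0 tt1; have := H2 t t0 tt2.
have l01 : 0 <= (1 / 2 : R) <= 1 by apply/andP; split; lra.
have := ck (x + t *: v) (x + t *: - v) _ l01.
have -> : 1 / 2 *: (x + t *: v) + (1 - 1 / 2) *: (x + t *: - v) = x.
  apply/rowP => i; rewrite !mxE; by field.
rewrite /dq => H A B.
have : 0 <= (k (x + t *: v) - k x) / t + (k (x + t *: - v) - k x) / t.
  rewrite -mulrDl; apply: divr_ge0; [lra | exact: ltW].
lra.
Qed.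

Lemma dd_sub (R : realType) (n : nat) (k : 'rV[R]_n -> R) x v w :
  rconvex k -> dd k x (v + w) <= dd k x v + dd k x w.
Proof.
move=> ck; apply/ler_addgt0Pr => e e0.
have e2 : 0 < e / 2 by lra.
have [t1 t10 H1] := @dd_approx _ _ k x v _ ck e2.
have [t2 t20 H2] := @dd_approx _ _ k x w _ ck e2.
pose t := Num.min t1 t2.
have t0 : 0 < t by rewrite !lt_min t10 t20.
have tt1 : t <= t1 by rewrite /t !ge_min le_refl.
have tt2 : t <= t2 by rewrite /t !ge_min le_refl !orbT.
have := H1 t t0 tt1; have := H2 t t0 tt2.
have t20' : 0 < t / 2 by lra.
have := @dd_le _ _ k x (v + w) (t / 2) ck t20'.
have l01 : 0 <= (1 / 2 : R) <= 1 by apply/andP; split; lra.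
have := ck (x + t *: v) (x + t *: w) _ l01.
have -> : 1 / 2 *: (x + t *: v) + (1 - 1 / 2) *: (x + t *: w) = x + t / 2 *: (v + w).
  by apply/rowP => i; rewrite !mxE; field.
rewrite /dq => H C A B.
have E : (k (x + t / 2 *: (v + w)) - k x) / (t / 2) =
   2 * (k (x + t / 2 *: (v + w)) - k x) / t.
  by field; exact: lt0r_neq0.
rewrite E in C.
have : 2 * (k (x + t / 2 *: (v + w)) - k x) / t <=
   (k (x + t *: v) - k x) / t + (k (x + t *: w) - k x) / t.
  rewrite -mulrDl ler_pM2r ?invr_gt0 //; lra.
lra.
Qed.

Lemma dd_hom (R : realType) (n : nat) (k : 'rV[R]_n -> R) x v s :
  rconvex k -> 0 < s -> dd k x (s *: v) = s * dd k x v.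
Proof.
move=> ck s0.
have qs t : 0 < t -> dq k x (s *: v) t = s * dq k x v (s * t).
  move=> t0; rewrite /dq scalerA (mulrC t s).
  by field; apply/andP; split; exact: lt0r_neq0.
apply/eqP; rewrite eq_le; apply/andP; split.
  apply/ler_addgt0Pr => e e0.
  have es : 0 < e / s by apply: divr_gt0.
  have [t1 t10 H1] := @dd_approx _ _ k x v _ ck es.
  have t1s : 0 < t1 / s by apply: divr_gt0.
  have := @dd_le _ _ k x (s *: v) _ ck t1s.
  rewrite qs // [s * (t1 / s)]mulrC divfK ?gt_eqF // => H.
  apply: le_trans H _.
  have := H1 t1 t10 (le_refl _).
  move=> H2; have := ler_wpM2l (ltW s0) H2.
  rewrite mulrDr => H3; apply: le_trans H3 _; rewrite lerD2l.
  by rewrite mulrC divfK ?gt_eqF.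
apply: dd_ge => t t0; rewrite qs //.
by rewrite ler_pM2l //; apply: dd_le => //; apply: mulr_gt0.
Qed.

Lemma entry_le_norm (R : realType) (n : nat) (v : 'rV[R]_n) (i : 'I_n) :
  `|v 0 i| <= `|v|.
Proof.
by rewrite [leRHS]/Num.norm /= mx_normrE; apply/bigmax_geP; right => /=; exists (ord0, i).
Qed.

Lemma lin_bound (R : realType) (n : nat) (l : 'rV[R]_n -> R) :
  (forall a b, l (a + b) = l a + l b) -> (forall c a, l (c *: a) = c * l a) ->
  exists2 C, 0 <= C & forall v, `|l v| <= C * `|v|.
Proof.
move=> ladd lsc.
have l0 : l 0 = 0 by rewrite -(scale0r 0) lsc mul0r.
exists (\sum_(j < n) `|l (delta_mx 0 j)|); first by apply: sumr_ge0 => j _.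
move=> v; rewrite {1}(row_sum_delta v).
rewrite (big_morph l ladd l0).
apply: le_trans (ler_norm_sum _ _ _) _.
rewrite mulr_suml; apply: ler_sum => j _.
by rewrite lsc normrM mulrC ler_wpM2l // entry_le_norm.
Qed.

Lemma near_norm_lt (R : realType) n (x : 'rV[R]_n) (d : R) :
  0 < d -> \forall y \near x, `|x - y| < d.
Proof. by move=> d0; apply/nbhs_normP; exists d. Qed.

Lemma lin_cont (R : realType) (n : nat) (l : 'rV[R]_n -> R) :
  (forall a b, l (a + b) = l a + l b) -> (forall c a, l (c *: a) = c * l a) ->
  continuous l.
Proof.
move=> ladd lsc; have [C C0 HC] := @lin_bound _ _ _ ladd lsc.
have lB a b : l (a - b) = l a - l b.
  by rewrite ladd -scaleN1r lsc mulN1r.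
move=> x.
suff H : forall e : R, 0 < e -> \forall t \near x, `|l x - l t| < e.
  exact/(@cvgrPdist_lt _ _ _ (nbhs x) _ l (l x)).
move=> e e0.
have C1 : 0 < C + 1 by lra.
near=> y.
have Hy : `|x - y| < e / (C + 1).
  near: y; exact: near_norm_lt (divr_gt0 e0 C1).
rewrite -lB; apply: le_lt_trans (HC _) _.
have : C * `|x - y| <= (C + 1) * `|x - y| by rewrite ler_wpM2r // lerDl.
move=> H; apply: le_lt_trans H _.
by rewrite mulrC -ltr_pdivlMr.
Unshelve. all: by end_near. Qed.

Lemma grad_onto (R : realType) (n : nat) (phi : 'rV[R]_n -> R)
  (phi_diff : forall x, differentiable phi x) (phi_coer : supercoercive phi)
  (l : 'rV[R]_n -> R) :
  (forall a b, l (a + b) = l a + l b) -> (forall c a, l (c *: a) = c * l a) ->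
  exists y, forall v, 'd phi y v = l v.
Proof.
move=> ladd lsc.
have [C C0 HC] := @lin_bound _ _ _ ladd lsc.
have [r Hr] := phi_coer (C + 1).
pose k := fun y => phi y - l y.
have kc : continuous k.
  move=> x; apply: (@cvgB _ _ _ (nbhs x) _ phi l); first exact: differentiable_continuous.
  exact: (@lin_cont _ _ _ ladd lsc).
pose Rb := Num.max r (Num.max (k 0) 0).
pose A := [set y : 'rV[R]_n | `|y| <= Rb].
have A0 : A !=set0 by exists 0; rewrite /A /= normr0 /Rb !le_max lexx !orbT.
have cA : compact A.
  apply: bounded_closed_compact.
    rewrite /= /bounded_near; near=> M => y /= Ay.
    apply: le_trans Ay _; near: M; apply: nbhs_pinfty_ge; exact: num_real.
  apply: (@preimage_closed _ _ (fun y : 'rV[R]_n => `|y|) [set x | x <= Rb]).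
    by move=> x _; exact: norm_continuous.
  exact: closed_le.
have [c cA' Hc] := @EVT_min_rV _ _ k A A0 cA (continuous_subspaceT kc).
have kmin : forall y, k c <= k y.
  move=> y; have [yA|yA] := boolP (y \in A); first exact: Hc.
  have yR : Rb < `|y|.
    by rewrite ltNge; apply/negP => H; move/negP: yA; apply; apply/mem_set.
  have ry : r < `|y| by apply: le_lt_trans yR; rewrite le_max lexx.
  have := Hr _ ry; have := HC y; rewrite ler_norml => /andP [_ Hl] H1.
  have k0 : k c <= k 0 by apply: Hc; rewrite inE /A /= normr0 /Rb !le_max lexx !orbT.
  have : k 0 <= Rb by rewrite /Rb !le_max lexx !orbT.
  rewrite /k in k0 *; nra.
exists c => v.
have key : forall w, forall e : R, 0 < e -> l w <= 'd phi c w + e.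
  move=> w e e0.
  have [d d0 Hd] := @line_bound _ _ _ _ w (phi_diff c) _ e0.
  have d2 : 0 < d / 2 by lra.
  have d2d : d / 2 < d by lra.
  have := Hd _ d2 d2d; rewrite ler_norml => /andP [_ H].
  have := kmin (c + d / 2 *: w); rewrite /k ladd lsc => H2.
  rewrite -(@ler_pM2l _ (d / 2)) //; nra.
have k1 : l v <= 'd phi c v by apply/ler_addgt0Pr; exact: key.
have k2 : l (- v) <= 'd phi c (- v) by apply/ler_addgt0Pr; exact: key.
have lN : l (- v) = - l v by rewrite -scaleN1r lsc mulN1r.
rewrite lN linearN /= in k2.
apply/eqP; rewrite eq_le k1 andbT; lra.
Unshelve. all: by end_near. Qed.

Lemma subgrad (R : realType) (n : nat) (phi : 'rV[R]_n -> R)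
  (phi_diff : forall x, differentiable phi x) (phi_coer : supercoercive phi)
  (h f0 : 'rV[R]_n -> R) :
  rconvex h -> rconvex f0 -> (forall z, h z + f0 z = phi z) ->
  forall x, exists c, forall z, 'd phi c (z - x) <= h z - h x.
Proof.
move=> ch cf hf x.
have dodd v : dd h x (- v) = - dd h x v.
  have S1 := @dd_sum _ _ _ _ _ x v (phi_diff x) ch cf hf.
  have S2 := @dd_sum _ _ _ _ _ x (- v) (phi_diff x) ch cf hf.
  rewrite linearN /= in S2.
  have O1 := @dd_opp_ge _ _ h x v ch.
  have O2 := @dd_opp_ge _ _ f0 x v cf.
  lra.
have dadd a b : dd h x (a + b) = dd h x a + dd h x b.
  apply/eqP; rewrite eq_le dd_sub //=.
  have := @dd_sub _ _ h x (- a) (- b) ch.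
  rewrite -opprD !dodd; lra.
have d0 : dd h x 0 = 0.
  have := dodd 0; rewrite oppr0; lra.
have dsc c a : dd h x (c *: a) = c * dd h x a.
  have [c0|c0|->] := ltgtP c 0; last by rewrite scale0r d0 mul0r.
    have -> : c *: a = (- c) *: (- a) by rewrite scaleNr scalerN opprK.
    by rewrite dd_hom // ?oppr_gt0 // dodd mulrNN.
  exact: dd_hom.
have [c Hc] := @grad_onto _ _ _ phi_diff phi_coer _ dadd dsc.
exists c => z; rewrite Hc.
have := @dd_le _ _ h x (z - x) 1 ch ltr01.
by rewrite /dq scale1r divr1 addrCA subrr addr0.
Qed.

Lemma bregman_xx (R : realType) (n : nat) (phi : 'rV[R]_n -> R) x :
  bregman phi x x = 0.
Proof. by rewrite /bregman !subrr linear0 subrr. Qed.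

Lemma bregman_diff (R : realType) (n : nat) (phi : 'rV[R]_n -> R) x x' c :
  bregman phi x' c - bregman phi x c = phi x' - phi x - 'd phi c (x' - x).
Proof.
rewrite /bregman.
have -> : x' - x = (x' - c) - (x - c) by rewrite opprB addrA subrK.
rewrite linearB /=; ring.
Qed.

Theorem mainTheorem6 (R : realType) (n : nat) (phi : 'rV[R]_n -> R)
  (phi_cvx : rconvex phi) (phi_strict : strictly_convex phi)
  (phi_diff : forall x, differentiable phi x)
  (phi_coer : supercoercive phi)
  (f : 'rV[R]_n -> \bar R)
  (f_proper : eproper f) (f_lsc : elsc f) (f_cvx : econvex f) :
  B_smooth phi f <->
  exists g : 'rV[R]_n -> \bar R, eproper g /\ f = left_env phi g.
Proof.
split.
- move=> [fp [mfp [_ wcm]]].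
  have fin x : f x \is a fin_num.
    rewrite fin_numE; apply/andP; split; first exact: fp.1.
    by apply/negP => /eqP fx; move: (mfp.1 x); rewrite fx.
  pose f0 x := fine (f x).
  have Ef x : f x = (f0 x)%:E by rewrite /f0 fineK.
  pose h x := phi x - f0 x.
  have cf : rconvex f0.
    move=> x y t Ht; have := f_cvx x y (f0 x) (f0 y) t Ht.
    by rewrite !Ef lee_fin; apply.
  have ch : rconvex h.
    move=> x y t Ht; have := wcm x y (h x) (h y) t Ht.
    rewrite /= !Ef -!EFinN -!EFinD !lee_fin /h !(addrC (- _)).
    by apply.
  have hf z : h z + f0 z = phi z by rewrite /h subrK.
  have sg := @subgrad _ _ _ phi_diff phi_coer _ _ ch cf hf.
  pose g y := ereal_sup [set (f x - (bregman phi x y)%:E)%E | x in [set: 'rV[R]_n]].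
  have gub x y : (f x - (bregman phi x y)%:E <= g y)%E.
    by apply: ereal_sup_ubound; exists x.
  have key x : exists c, (g c <= (f0 x - bregman phi x c)%:E)%E.
    have [c Hc] := sg x; exists c; apply: ge_ereal_sup => _ [x' _ <-].
    rewrite Ef -EFinB lee_fin.
    have := Hc x'; have := @bregman_diff _ _ phi x x' c; rewrite /h; lra.
  exists g; split.
    split.
      move=> y; have := gub y y; rewrite (@bregman_xx _ _ phi) Ef.
      by case: (g y).
    have [c Hc] := key 0; exists c; move: Hc.
    by case: (g c).
  apply/funext => x; apply/eqP; rewrite eq_le; apply/andP; split.
    apply: le_ereal_inf_tmp => _ [w _ <-].
    move: (gub x w); rewrite Ef.
    case: (g w) => [r| |] //=; last by move=> _; rewrite addye // leey.
    by rewrite -!EFinD !lee_fin; lra.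
  have [c Hc] := key x; rewrite /left_env; apply: ge_ereal_inf.
  exists (g c + (bregman phi x c)%:E)%E; first by exists c.
  move: Hc; rewrite Ef.
  case: (g c) => [r| |] //=.
  by rewrite -EFinD !lee_fin; lra.
  by move=> _; rewrite addNye leNye.
- move=> [g [[gm [y0 gy0]] Ef]].
  have gfin : g y0 \is a fin_num by rewrite fin_numE gm gy0.
  have ffin x : f x \is a fin_num.
    rewrite fin_numE f_proper.1 /=; apply/eqP => H.
    have : (left_env phi g x <= g y0 + (bregman phi x y0)%:E)%E.
      by apply: ereal_inf_lbound; exists y0.
    by rewrite -Ef H -(fineK gfin).
  pose f0 x := fine (f x).
  have Ef' x : f x = (f0 x)%:E by rewrite /f0 fineK.
  split; first exact: f_proper.
  split.
    split; first by move=> x; rewrite Ef'.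
    by exists 0; rewrite Ef'.
  split.
    move=> x y a b t Ht; rewrite /= !Ef' -!EFinD !lee_fin => Hx Hy.
    have := f_cvx x y (f0 x) (f0 y) t Ht.
    rewrite -!Ef' => /(_ (le_refl _) (le_refl _)); rewrite Ef' lee_fin => Hz.
    have Hp := phi_cvx x y t Ht; move/andP: Ht => [t0 t1].
    have t1' : 0 <= 1 - t by lra.
    have := ler_wpM2l t0 Hx; have := ler_wpM2l t1' Hy; lra.
  move=> x y a b t Ht; rewrite /= !Ef' -!EFinN -!EFinD !lee_fin => Hx Hy.
  set z := t *: x + (1 - t) *: y.
  have : ((phi z - t * a - (1 - t) * b)%:E <= f z)%E.
    rewrite Ef; apply: le_ereal_inf_tmp => _ [w _ <-].
    have Hxw : (f x <= g w + (bregman phi x w)%:E)%E.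
      by rewrite {1}Ef; apply: ereal_inf_lbound; exists w.
    have Hyw : (f y <= g w + (bregman phi y w)%:E)%E.
      by rewrite {1}Ef; apply: ereal_inf_lbound; exists w.
    move: Hxw Hyw (gm w); rewrite !Ef'.
    case: (g w) => [r| |] //=; last by move=> *; rewrite addye // leey.
    rewrite -!EFinD !lee_fin => Hxw Hyw _.
    have Lz : 'd phi w (z - w) = t * 'd phi w (x - w) + (1 - t) * 'd phi w (y - w).
      have -> : z - w = t *: (x - w) + (1 - t) *: (y - w).
        by apply/rowP => i; rewrite !mxE; ring.
      by rewrite linearD !linearZ.
    move: Hxw Hyw; rewrite /bregman Lz; move/andP: Ht => [t0 t1] Hxw Hyw.
    have t1' : 0 <= 1 - t by lra.
    have E1 : - a <= r - phi w - 'd phi w (x - w) by lra.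
    have E2 : - b <= r - phi w - 'd phi w (y - w) by lra.
    have := ler_wpM2l t0 E1; have := ler_wpM2l t1' E2; lra.
  rewrite Ef' lee_fin; lra.
Qed.
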